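(* Let $q\in[0,1)$ and let $\mathfrak M$ be an $N$-dimensional space of $\mathbb C^n$-valued functions analytic in a neighbourhood of the origin which is invariant under $R_q$. Let $F$ be a $\mathbb C^{n\times N}$-valued function whose columns form a basis of $\mathfrak M$, and put $C=F(0)\in\mathbb C^{n\times N}$. Then there exists a matrix $A_q\in\mathbb C^{N\times N}$ such that, for $z$ in a neighbourhood of the origin, \[ F(z)=C\prod_{j=0}^\infty \bigl(I_N-(1-q)zq^jA_q\bigr)^{-1}. \]
   Context: For $q\in(0,1)$, $R_q$ is the $q$-Jackson derivative $(R_qf)(z)=\frac{f(z)-f(qz)}{(1-q)z}$ (extended at $z=0$ by continuity); for $q=0$, $R_0$ is the backward shift $(R_0f)(z)=\frac{f(z)-f(0)}{z}$ for $z\neq0$, $(R_0f)(0)=f'(0)$. The operator acts entrywise on vector/matrix-valued functions. Convention $q^0=1$ (so for $q=0$ the product reduces to $(I_N-zA_q)^{-1}$). All factors of the product commute. *)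

(* Defs.v *)
(* Complex numbers are [R[i]] (the
   complex field over a real closed field from mathcomp-real-closed),
   with [R : realType] so that [R[i]] is complete. *)
From HB Require Import structures.
From mathcomp Require Import all_boot all_order all_algebra.
From mathcomp Require Import all_classical all_reals all_analysis.
From mathcomp Require Export complex.
Export numFieldNormedType.Exports.

Set Implicit Arguments.
Unset Strict Implicit.
Unset Printing Implicit Defensive.

Import Order.TTheory GRing.Theory Num.Theory.
Local Open Scope ring_scope.
Local Open Scope complex_scope.
Local Open Scope classical_set_scope.

(* Equip R[i] with its (norm-induced) topology / normed structure as a
   numFieldType, exactly as the library does for abstract numFieldTypes. *)
HB.instance Definition _ (R : rcfType) := NormedModule.copy R[i] R[i]^o.

Section Defs.
Variable R : realType.
Local Notation C := R[i].

Definition analytic0 (f : C -> C) : Prop :=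
  exists r : R, 0 < r /\
    exists a : nat -> C, forall z : C, `|z| < r%:C ->
      (fun m : nat => \sum_(k < m) a k * z ^+ k) @ \oo --> f z.

Definition mx_analytic0 (a b : nat) (f : C -> 'M[C]_(a, b)) : Prop :=
  forall i j, analytic0 (fun z => f z i j).

(* The operator R_q, acting entrywise on matrix-valued functions:
   for z <> 0, (R_q f)(z) = (f(z) - f(qz)) / ((1-q) z); at z = 0 it is
   extended by continuity, i.e. it is the limit of this quotient as z -> 0
   (for q = 0 this limit is, by definition, f'(0)). *)
Definition Rq (q : R) (a b : nat) (f : C -> 'M[C]_(a, b)) (z : C) : 'M[C]_(a, b) :=
  let g := fun w : C => ((1 - q%:C) * w)^-1 *: (f w - f (q%:C * w)) in
  if z == 0 then lim (g @ (0 : C)^') else g z.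

Fixpoint qprod (q : R) (N : nat) (A : 'M[C]_N) (z : C) (m : nat) : 'M[C]_N :=
  match m with
  | 0 => 1%:M
  | m'.+1 => qprod q A z m' *m invmx (1%:M - ((1 - q%:C) * z * q%:C ^+ m') *: A)
  end.

End Defs.

(* Main.v *)
Require Import Defs.
From HB Require Import structures.
From mathcomp Require Import all_boot all_order all_algebra.
From mathcomp Require Import all_classical all_reals all_analysis.
From mathcomp Require Import complex.
From mathcomp Require Import ring lra.
Import Order.TTheory GRing.Theory Num.Theory.
Import numFieldNormedType.Exports.
Local Open Scope ring_scope.
Local Open Scope complex_scope.
Local Open Scope classical_set_scope.
Set Implicit Arguments.
Unset Strict Implicit.
Unset Printing Implicit Defensive.


Notation ReC := complex.Re.
Notation ImC := complex.Im.
Section Sc.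
Variable R : realType.
Local Notation C := R[i].

Definition nc (x : C) : R := Num.sqrt (ReC x ^+ 2 + ImC x ^+ 2).

Lemma normE (x : C) : `|x| = (nc x)%:C.
Proof. by rewrite normc_def. Qed.

Lemma nc_ge0 x : 0 <= nc x.
Proof. exact: sqrtr_ge0. Qed.

Lemma ncD x y : nc (x + y) <= nc x + nc y.
Proof. by rewrite -lecR rmorphD /= -!normE ler_normD. Qed.

Lemma ncM x y : nc (x * y) = nc x * nc y.
Proof. by apply: complexI; rewrite rmorphM /= -!normE normrM. Qed.

Lemma ncN x : nc (- x) = nc x.
Proof. by apply: complexI; rewrite -!normE normrN. Qed.

Lemma ncB x y : nc (x - y) = nc (y - x).
Proof. by rewrite -ncN opprB. Qed.

Lemma nc0 : nc 0 = 0.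
Proof. by apply: complexI; rewrite -!normE normr0. Qed.

Lemma nc_eq0 x : nc x = 0 -> x = 0.
Proof. by move=> h; apply/eqP; rewrite -normr_eq0 normE h. Qed.

Lemma ncR (r : R) : nc r%:C = `|r|.
Proof. by rewrite /nc /= expr0n /= addr0 sqrtr_sqr. Qed.

Lemma Re_le x : `|ReC x| <= nc x.
Proof.
rewrite /nc -sqrtr_sqr; apply: ler_wsqrtr.
by rewrite lerDl sqr_ge0.
Qed.

Lemma Im_le x : `|ImC x| <= nc x.
Proof.
rewrite /nc -sqrtr_sqr; apply: ler_wsqrtr.
by rewrite lerDr sqr_ge0.
Qed.

Lemma nc_le x : nc x <= `|ReC x| + `|ImC x|.
Proof.
have h : 0 <= `|ReC x| + `|ImC x| by rewrite addr_ge0.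
rewrite /nc -(ger0_norm h) -sqrtr_sqr; apply: ler_wsqrtr.
rewrite sqrrD -[ReC x ^+ 2]real_normK ?num_real // -[ImC x ^+ 2]real_normK ?num_real //.
rewrite -addrA lerD2l lerDr.
by rewrite mulrn_wge0 // mulr_ge0.
Qed.

Lemma nc_sum (I : Type) (r : seq I) (P : pred I) (f : I -> C) :
  nc (\sum_(i <- r | P i) f i) <= \sum_(i <- r | P i) nc (f i).
Proof.
elim/big_rec2: _ => [|i y x _ h]; first by rewrite nc0.
by apply: (le_trans (ncD _ _)); rewrite lerD2l.
Qed.

End Sc.

Section Mx.
Variable R : realType.
Local Notation C := R[i].

Definition Lm m n (X : 'M[C]_(m, n)) : R := \sum_i \sum_j nc (X i j).

Lemma Lm_ge0 m n (X : 'M[C]_(m, n)) : 0 <= Lm X.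
Proof. by apply: sumr_ge0 => i _; apply: sumr_ge0 => j _; apply: nc_ge0. Qed.

Lemma Lm_entry m n (X : 'M[C]_(m, n)) i j : nc (X i j) <= Lm X.
Proof.
rewrite /Lm (bigD1 i) //= (bigD1 j) //= -addrA lerDl.
apply: addr_ge0; first by apply: sumr_ge0 => k _; apply: nc_ge0.
by apply: sumr_ge0 => k _; apply: sumr_ge0 => l _; apply: nc_ge0.
Qed.

Lemma LmD m n (X Y : 'M[C]_(m, n)) : Lm (X + Y) <= Lm X + Lm Y.
Proof.
rewrite /Lm -big_split /=; apply: ler_sum => i _.
rewrite -big_split /=; apply: ler_sum => j _; rewrite mxE; exact: ncD.
Qed.

Lemma LmN m n (X : 'M[C]_(m, n)) : Lm (- X) = Lm X.
Proof. by rewrite /Lm; apply: eq_bigr => i _; apply: eq_bigr => j _; rewrite mxE ncN. Qed.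

Lemma LmB m n (X Y : 'M[C]_(m, n)) : Lm (X - Y) = Lm (Y - X).
Proof. by rewrite -LmN opprB. Qed.

Lemma LmZ m n (c : C) (X : 'M[C]_(m, n)) : Lm (c *: X) = nc c * Lm X.
Proof.
rewrite /Lm mulr_sumr; apply: eq_bigr => i _; rewrite mulr_sumr.
by apply: eq_bigr => j _; rewrite mxE ncM.
Qed.

Lemma Lm_eq0 m n (X : 'M[C]_(m, n)) : Lm X <= 0 -> X = 0.
Proof.
move=> h; apply/matrixP => i j; rewrite mxE; apply: nc_eq0.
apply/eqP; rewrite eq_le nc_ge0 andbT; exact: le_trans (Lm_entry X i j) h.
Qed.

Lemma Lm1 n : Lm (1%:M : 'M[C]_n) = n%:R.
Proof.
rewrite /Lm (eq_bigr (fun _ => 1)) ?sumr_const ?card_ord // => i _.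
rewrite (bigD1 i) //= big1 ?mxE ?eqxx ?addr0.
  by rewrite -[1 : C]/(1%:C) ncR normr1.
by move=> j /negbTE ji; rewrite mxE eq_sym ji /= nc0.
Qed.

Lemma LmM m n p (X : 'M[C]_(m, n)) (Y : 'M[C]_(n, p)) :
  Lm (X *m Y) <= Lm X * Lm Y.
Proof.
apply: (@le_trans _ _ (\sum_i \sum_j nc (X i j) * \sum_k nc (Y j k))).
  rewrite /Lm; apply: ler_sum => i _.
  apply: (@le_trans _ _ (\sum_k \sum_j nc (X i j) * nc (Y j k))).
    apply: ler_sum => k _; rewrite mxE; apply: (le_trans (nc_sum _ _ _)).
    by apply: ler_sum => j _; rewrite ncM.
  rewrite exchange_big /=; apply: ler_sum => j _; rewrite mulr_sumr.
  by apply: ler_sum => k _.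
rewrite /Lm mulr_suml; apply: ler_sum => i _; rewrite mulr_suml.
apply: ler_sum => j _; apply: ler_wpM2l; first exact: nc_ge0.
rewrite (bigD1 j) //= lerDl; apply: sumr_ge0 => l _.
by apply: sumr_ge0 => k _; apply: nc_ge0.
Qed.

End Mx.

Section Geo.
Variable R : realType.

Lemma geo_lim (u : nat -> R) (D q : R) : 0 <= q ->
  (forall m k, (m <= k)%N -> `|u k - u m| <= D * q ^+ m) ->
  exists a, forall m, `|a - u m| <= D * q ^+ m.
Proof.
move=> q0 hu.
have D0 : 0 <= D by have := hu 0%N 0%N (leqnn 0); rewrite subrr normr0 expr0 mulr1.
pose E := [set x | exists k, x = u k - D * q ^+ k].
have ub m : ubound E (u m + D * q ^+ m).
  move=> _ [k ->].
  have Dk : 0 <= D * q ^+ k by rewrite mulr_ge0 // exprn_ge0.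
  have Dm : 0 <= D * q ^+ m by rewrite mulr_ge0 // exprn_ge0.
  case: (leqP m k) => [mk|km].
    have := hu _ _ mk; rewrite ler_norml => /andP[_ h]; lra.
  have := hu _ _ (ltnW km); rewrite ler_norml => /andP[h _]; lra.
have E0 : E !=set0 by exists (u 0%N - D * q ^+ 0); exists 0%N.
have hs : has_sup E by split => //; exists (u 0%N + D * q ^+ 0); exact: ub.
exists (sup E) => m; rewrite ler_norml; apply/andP; split.
  have : u m - D * q ^+ m <= sup E by apply: sup_upper_bound => //; exists m.
  lra.
have := ge_sup E0 (ub m); lra.
Qed.

Lemma geo_small (q eps E : R) : 0 <= q -> q < 1 -> 0 < eps -> 0 <= E ->
  exists M, forall m, (M <= m)%N -> E * q ^+ m < eps.
Proof.
move=> q0 q1 e0 E0.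
have hq : `|q| < 1 by rewrite ger0_norm.
have e1 : 0 < eps / (E + 1) by rewrite divr_gt0 // ltr_wpDl.
have [M _ hM] := @cvgr_dist_lt _ _ _ _ _ (fun n => q ^+ n) 0 (cvg_expr hq) _ e1.
exists M => m Mm; have := hM m Mm; rewrite /= sub0r normrN ger0_norm ?exprn_ge0 //.
move=> h.
have h2 : E * q ^+ m <= (E + 1) * q ^+ m by rewrite ler_wpM2r ?exprn_ge0 // lerDl.
apply: le_lt_trans h2 _; rewrite mulrC -ltr_pdivlMr ?ltr_wpDl //.
Qed.

Lemma geo_zero (q x E : R) : 0 <= q -> q < 1 -> 0 <= E ->
  (forall m, x <= E * q ^+ m.+1) -> x <= 0.
Proof.
move=> q0 q1 E0 h; rewrite leNgt; apply/negP => x0.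
have [M hM] := geo_small q0 q1 x0 E0.
have := hM M.+1 (leqnSn M); have := h M; lra.
Qed.

End Geo.

Section Lim.
Variable R : realType.
Local Notation C := R[i].

Lemma ReB (x y : C) : ReC (x - y) = ReC x - ReC y.
Proof. by case: x; case: y. Qed.
Lemma ImB (x y : C) : ImC (x - y) = ImC x - ImC y.
Proof. by case: x; case: y. Qed.

Lemma geo_limC (u : nat -> C) (D q : R) : 0 <= q ->
  (forall m k, (m <= k)%N -> nc (u k - u m) <= D * q ^+ m) ->
  exists l, forall m, nc (l - u m) <= 2 * D * q ^+ m.
Proof.
move=> q0 hu.
have hr m k : (m <= k)%N -> `|ReC (u k) - ReC (u m)| <= D * q ^+ m.
  by move=> mk; rewrite -ReB; apply: le_trans (Re_le _) (hu m k mk).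
have hi m k : (m <= k)%N -> `|ImC (u k) - ImC (u m)| <= D * q ^+ m.
  by move=> mk; rewrite -ImB; apply: le_trans (Im_le _) (hu m k mk).
have [a ha] := @geo_lim R (fun k => ReC (u k)) D q q0 hr.
have [b hb] := @geo_lim R (fun k => ImC (u k)) D q q0 hi.
exists (a +i* b) => m; apply: le_trans (nc_le _) _.
rewrite ReB ImB /=; have := ha m; have := hb m; lra.
Qed.

Lemma geo_limM m n (Q : nat -> 'M[C]_(m, n)) (D q : R) : 0 <= q ->
  (forall a k, (a <= k)%N -> Lm (Q k - Q a) <= D * q ^+ a) ->
  exists P, forall a, Lm (P - Q a) <= (m * n)%:R * (2 * D * q ^+ a).
Proof.
move=> q0 hQ.
have h (ij : 'I_m * 'I_n) : exists l, forall a, nc (l - Q a ij.1 ij.2) <= 2 * D * q ^+ a.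
  apply: (geo_limC q0) => a k ak; apply: le_trans (hQ a k ak).
  have e := Lm_entry (Q k - Q a) ij.1 ij.2; rewrite !mxE in e; exact: e.
have [f hf] := choice h.
exists (\matrix_(i, j) f (i, j)) => a.
rewrite /Lm.
apply: (@le_trans _ _ (\sum_(i < m) \sum_(j < n) (2 * D * q ^+ a))).
  apply: ler_sum => i _; apply: ler_sum => j _; rewrite !mxE; exact: (hf (i, j) a).
rewrite sumr_const sumr_const !card_ord -mulrnA [in X in _ <= X]mulr_natl mulnC.
exact: lexx.
Qed.

Lemma Lm_cvg m n (Q : nat -> 'M[C]_(m, n)) P (E q : R) : 0 <= q -> q < 1 -> 0 <= E ->
  (forall a, Lm (P - Q a) <= E * q ^+ a) -> Q @ \oo --> P.
Proof.
move=> q0 q1 E0 hQ; apply/cvg_ballP; case=> a b; rewrite ltcE /= => /andP[/eqP hb a0].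
subst b.
have [M hM] := geo_small q0 q1 a0 E0.
exists M => // t Mt; split; first by rewrite complexr0 ltcR.
move=> i j; rewrite /ball /= normE complexr0 ltcR.
apply: le_lt_trans (hM t Mt); apply: le_trans (hQ t).
have e := Lm_entry (P - Q t) i j; rewrite !mxE in e; exact: e.
Qed.

End Lim.

Section Prod.
Variable R : realType.
Local Notation C := R[i].

Lemma unit_small N (B : 'M[C]_N) (t : C) : nc t * Lm B < 1 ->
  (1%:M - t *: B) \in unitmx.
Proof.
move=> h; set M := 1%:M - t *: B.
case: (boolP (M \in unitmx)) => // hu; exfalso.
have hV : kermx M = t *: (kermx M *m B).
  have := mulmx_ker M; rewrite /M mulmxBr mulmx1 -scalemxAr => /eqP.
  by rewrite subr_eq0 => /eqP.
have V0 : kermx M = 0.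
  apply: Lm_eq0.
  have h1 : Lm (kermx M) <= nc t * (Lm (kermx M) * Lm B).
    by rewrite {1}hV LmZ ler_wpM2l ?nc_ge0 // LmM.
  have h2 := Lm_ge0 (kermx M); have h3 := Lm_ge0 B; have h4 := nc_ge0 t.
  nra.
have : \rank (kermx M) = 0%N by rewrite V0 mxrank0.
rewrite mxrank_ker => /eqP; rewrite subn_eq0 => hr.
move: hu; rewrite -row_free_unit /row_free eqn_leq rank_leq_row /=.
by rewrite hr.
Qed.

Lemma ncRX (q : R) j : 0 <= q -> nc (q%:C ^+ j) = q ^+ j.
Proof. by move=> q0; rewrite -rmorphXn ncR ger0_norm // exprn_ge0. Qed.

Lemma comm_inv N (X Y : 'M[C]_N) : X *m Y = Y *m X -> invmx X *m Y = Y *m invmx X.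
Proof.
move=> h; case: (boolP (X \in unitmx)) => hX; last by rewrite invmx_out.
by apply: (canRL (mulmxK hX)); rewrite -mulmxA -h mulmxA (mulVmx hX) mul1mx.
Qed.

Variables (N : nat) (q : R) (A : 'M[C]_N) (z : C).
Hypothesis hq0 : 0 <= q.
Hypothesis hq1 : q < 1.
Definition k := nc ((1 - q%:C) * z) * Lm A.
Hypothesis hk : k <= (1 - q) / 2.

Definition Mf j : 'M[C]_N := 1%:M - ((1 - q%:C) * z * q%:C ^+ j) *: A.

Lemma k_ge0 : 0 <= k.
Proof. by rewrite mulr_ge0 ?nc_ge0 ?Lm_ge0. Qed.

Lemma xj j : nc ((1 - q%:C) * z * q%:C ^+ j) * Lm A = k * q ^+ j.
Proof. by rewrite ncM ncRX // mulrAC. Qed.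

Lemma Mf_unit j : Mf j \in unitmx.
Proof.
apply: unit_small; rewrite xj.
have h1 : q ^+ j <= 1 by rewrite exprn_ile1 // ltW.
have h2 := k_ge0; have h3 : 0 <= q ^+ j by rewrite exprn_ge0.
have h4 : k * q ^+ j <= k by nra.
have h5 := hk; have h6 := hq0; lra.
Qed.

Lemma qprodS m : qprod q A z m.+1 = qprod q A z m *m invmx (Mf m).
Proof. by []. Qed.

Lemma qprod_rec m : qprod q A z m.+1 =
  qprod q A z m + ((1 - q%:C) * z * q%:C ^+ m) *: (qprod q A z m.+1 *m A).
Proof.
have h : qprod q A z m.+1 *m Mf m = qprod q A z m by rewrite qprodS mulmxKV // Mf_unit.
rewrite -{1}h /Mf mulmxBr mulmx1 -scalemxAr.
by rewrite subrK.
Qed.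

Definition a := k / (1 - q).

Lemma qprod_bound0 m : Lm (qprod q A z m) * (1 - a + a * q ^+ m) <= N%:R.
Proof.
have hq0' := hq0; have hq1' := hq1; have hk' := hk.
have q1 : 0 < 1 - q by rewrite subr_gt0.
have ak : a * (1 - q) = k by rewrite /a divfK // gt_eqF.
have a2 : a <= 1/2 by rewrite /a ler_pdivrMr //; lra.
have a0 : 0 <= a by rewrite /a divr_ge0 ?k_ge0 // ltW.
elim: m => [|m IH].
  by rewrite expr0 mulr1 subrK mulr1 Lm1.
set L' := Lm (qprod q A z m.+1); set L := Lm (qprod q A z m).
have hL : L' <= L + k * q ^+ m * L'.
  rewrite /L' {1}qprod_rec; apply: le_trans (LmD _ _) _; rewrite lerD2l LmZ.
  apply: le_trans (ler_wpM2l (nc_ge0 _) (LmM _ _)) _.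
  by rewrite mulrCA mulrC xj.
have L'0 : 0 <= L' := Lm_ge0 _.
have L0 : 0 <= L := Lm_ge0 _.
have qm1 : q ^+ m <= 1 by rewrite exprn_ile1 // ltW.
have qm0 : 0 <= q ^+ m by rewrite exprn_ge0.
have xe : a * q ^+ m.+1 = a * q ^+ m - k * q ^+ m.
  by rewrite exprS -ak; ring.
rewrite xe.
set s := 1 - a + a * q ^+ m.
have s1 : s <= 1 by rewrite /s; nra.
have s0 : 1/2 <= s by rewrite /s; nra.
set x := k * q ^+ m.
have x0 : 0 <= x by rewrite /x mulr_ge0 ?k_ge0.
have e : 1 - a + (a * q ^+ m - x) = s - x by rewrite /s; ring.
rewrite e.
have xL : 0 <= x * L' by rewrite mulr_ge0.
have h1 : L' * (s - x) <= s * (L' - x * L') by nra.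
have hL' : L' <= L + x * L' by [].
have h2 : L' - x * L' <= L by lra.
have h3 : s * (L' - x * L') <= s * L by rewrite ler_wpM2l //; lra.
have h4 : s * L <= N%:R by rewrite mulrC.
lra.
Qed.

Lemma qprod_bound m : Lm (qprod q A z m) <= 2 * N%:R.
Proof.
have hq0' := hq0; have hq1' := hq1; have hk' := hk.
have q1 : 0 < 1 - q by rewrite subr_gt0.
have a2 : a <= 1/2 by rewrite /a ler_pdivrMr //; lra.
have a0 : 0 <= a by rewrite /a divr_ge0 ?k_ge0 // ltW.
have h := qprod_bound0 m.
have qm0 : 0 <= q ^+ m by rewrite exprn_ge0.
have L0 := Lm_ge0 (qprod q A z m).
have s0 : 1/2 <= 1 - a + a * q ^+ m by nra.
nra.
Qed.

Lemma qprod_diff1 m : Lm (qprod q A z m.+1 - qprod q A z m) <= 2 * N%:R * k * q ^+ m.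
Proof.
rewrite {1}qprod_rec addrC addKr LmZ.
apply: le_trans (ler_wpM2l (nc_ge0 _) (LmM _ _)) _.
rewrite mulrCA mulrC xj.
have h := qprod_bound m.+1.
have h2 : 0 <= k * q ^+ m by rewrite mulr_ge0 ?exprn_ge0 ?k_ge0.
nra.
Qed.

Lemma qprod_diff m p : (m <= p)%N ->
  Lm (qprod q A z p - qprod q A z m) <= (2 * N%:R * k / (1 - q)) * q ^+ m.
Proof.
have hq0' := hq0; have hq1' := hq1.
have q1 : 0 < 1 - q by rewrite subr_gt0.
move=> mp.
suff h : (1 - q) * Lm (qprod q A z p - qprod q A z m) <= 2 * N%:R * k * (q ^+ m - q ^+ p).
  rewrite mulrAC ler_pdivlMr // mulrC; apply: le_trans h _.
  apply: ler_wpM2l; first by apply: mulr_ge0; [apply: mulr_ge0; [lra|exact: ler0n]|exact: k_ge0].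
  have : 0 <= q ^+ p := exprn_ge0 _ hq0; lra.
elim: p mp => [|p IH].
  by rewrite leqn0 => /eqP ->; rewrite subrr /Lm big1 ?mulr0 ?subrr ?mulr0 // => i _; rewrite big1 // => j _; rewrite mxE nc0.
rewrite leq_eqVlt => /orP[/eqP <-|mp].
  by rewrite subrr /Lm big1 ?mulr0 ?subrr ?mulr0 // => i _; rewrite big1 // => j _; rewrite mxE nc0.
have := IH mp.
have hd := qprod_diff1 p.
have ht : Lm (qprod q A z p.+1 - qprod q A z m) <=
   Lm (qprod q A z p.+1 - qprod q A z p) + Lm (qprod q A z p - qprod q A z m).
  by apply: le_trans (LmD _ _); rewrite addrA subrK.
have e : q ^+ p.+1 = q * q ^+ p by rewrite exprS.
rewrite e => h1.
have k0 := k_ge0; have qp0 : 0 <= q ^+ p by rewrite exprn_ge0.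
have N0 : 0 <= N%:R :> R by [].
have c2 : 0 <= 2 * N%:R * k by apply: mulr_ge0; [apply: mulr_ge0; [lra|exact: ler0n]|exact: k_ge0].
have kq : 0 <= 2 * N%:R * k * q ^+ p by apply: mulr_ge0.
nra.
Qed.

End Prod.

Section An.
Variable R : realType.
Local Notation C := R[i].

Lemma ncX (w : C) k : nc (w ^+ k) = nc w ^+ k.
Proof.
elim: k => [|k IH]; first by rewrite !expr0 -[1 : C]/(1%:C) ncR normr1.
by rewrite !exprS ncM IH.
Qed.

Lemma near0_nc (P : C -> Prop) : (\forall w \near (0 : C), P w) ->
  exists d : R, 0 < d /\ forall w, nc w < d -> P w.
Proof.
move/nbhs_ballP => [e /= e0 he].
move: e0 he; case: e => a b; rewrite ltcE /= => /andP[/eqP hb a0] he; subst b.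
exists a; split => // w hw; apply: he; rewrite /ball /= normE complexr0 ltcR sub0r ncN.
exact: hw.
Qed.

Lemma nc_near0 (P : C -> Prop) (d : R) : 0 < d -> (forall w, nc w < d -> P w) ->
  \forall w \near (0 : C), P w.
Proof.
move=> d0 h; apply/nbhs_ballP; exists d%:C; first by rewrite /= ltcR.
move=> w; rewrite /ball /= normE ltcR sub0r ncN; exact: h.
Qed.

Lemma cvg_eventually (u : nat -> C) (l : C) (e : R) : 0 < e -> u @ \oo --> l ->
  exists M, forall m, (M <= m)%N -> nc (l - u m) < e.
Proof.
move=> e0 hu.
have e0' : (0 : C) < e%:C by rewrite ltcR.
have [M _ hM] := @cvgr_dist_lt _ _ _ _ _ u l hu _ e0'.
by exists M => m Mm; have := hM m Mm; rewrite normE ltcR.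
Qed.

Lemma analytic_lip (f : C -> C) : analytic0 f ->
  exists K : R, 0 <= K /\ \forall w \near (0 : C), nc (f w - f 0) <= K * nc w.
Proof.
move=> [r [r0 [a ha]]].
pose S w m := \sum_(k < m) a k * w ^+ k.
have SS w m : S w m.+1 - S w m = a m * w ^+ m.
  rewrite /S -!(big_mkord xpredT (fun k => a k * w ^+ k)) big_nat_recr //=. by rewrite addrAC subrr add0r.
pose rho := r / 2.
have rho0 : 0 < rho by rewrite /rho divr_gt0.
have rhor : rho < r by rewrite /rho; lra.
have [B [B0 hB]] : exists B, 0 <= B /\ forall m, nc (a m) * rho ^+ m <= B.
  have hz0 : `|rho%:C| < r%:C by rewrite normE ncR ltcR ger0_norm // ltW.
  have h12 : (0 : R) < 1/2 by lra.
  have [M hM] := cvg_eventually h12 (ha _ hz0).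
  have hsum : 0 <= \sum_(k < M) nc (a k) * rho ^+ k.
    by apply: sumr_ge0 => k _; rewrite mulr_ge0 ?nc_ge0 ?exprn_ge0 // ltW.
  exists (1 + \sum_(k < M) nc (a k) * rho ^+ k); split; first lra.
  move=> m; case: (ltnP m M) => mM.
    rewrite (bigD1 (Ordinal mM)) //=.
    have : 0 <= \sum_(k < M | k != Ordinal mM) nc (a k) * rho ^+ k.
      by apply: sumr_ge0 => k _; rewrite mulr_ge0 ?nc_ge0 ?exprn_ge0 // ltW.
    lra.
  have e1 : nc (a m) * rho ^+ m = nc (S rho%:C m.+1 - S rho%:C m).
    by rewrite SS ncM ncRX // ltW.
  have e2 : S rho%:C m.+1 - S rho%:C m =
     (f rho%:C - S rho%:C m) - (f rho%:C - S rho%:C m.+1) by ring.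
  have h1 := hM m mM; have h2 := hM m.+1 (leqW mM).
  have h3 := ncD (f rho%:C - S rho%:C m) (- (f rho%:C - S rho%:C m.+1)).
  rewrite ncN -e2 -e1 in h3.
  lra.
pose bnd w := forall m, nc (S w m.+1 - a 0%N) <= 2 * B * (nc w / rho) - 2 * B * (nc w / rho) ^+ m.+1.
have hbnd w : nc w <= rho / 2 -> bnd w.
  move=> hw; set t := nc w / rho.
  have t0 : 0 <= t by rewrite /t divr_ge0 ?nc_ge0 // ltW.
  have t2 : t <= 1/2 by rewrite /t ler_pdivrMr //; lra.
  elim=> [|m IH].
    rewrite /S big_ord1 expr0 mulr1 subrr nc0 expr1 subrr; exact: lexx.
  have e : S w m.+2 - a 0%N = (S w m.+1 - a 0%N) + a m.+1 * w ^+ m.+1.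
    by rewrite -SS; ring.
  rewrite e; apply: le_trans (ncD _ _) _.
  have hk : nc (a m.+1 * w ^+ m.+1) <= B * t ^+ m.+1.
    have ew : nc w = t * rho by rewrite /t divfK // gt_eqF.
    rewrite ncM ncX ew exprMn.
    have := hB m.+1; have : 0 <= t ^+ m.+1 by rewrite exprn_ge0.
    nra.
  have tm0 : 0 <= B * t ^+ m.+1 by rewrite mulr_ge0 ?exprn_ge0.
  have e3 : t ^+ m.+2 = t * t ^+ m.+1 by rewrite exprS.
  rewrite e3; nra.
have hlim w : nc w <= rho / 2 -> nc (f w - a 0%N) <= 2 * B * (nc w / rho).
  move=> hw.
  have hwr : `|w| < r%:C by rewrite normE ltcR; lra.
  apply/ler_addgt0Pr => e e0.
  have [M hM] := cvg_eventually e0 (ha w hwr).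
  have h1 : nc (f w - S w M.+1) < e := hM M.+1 (leqnSn M).
  have h2 := hbnd w hw M.
  have h3 := ncD (f w - S w M.+1) (S w M.+1 - a 0%N).
  rewrite addrA subrK in h3.
  have h4 : 0 <= 2 * B * (nc w / rho) ^+ M.+1.
    by rewrite mulr_ge0 ?exprn_ge0 ?divr_ge0 ?nc_ge0 // ?mulr_ge0 // ltW.
  lra.
have f0 : f 0 = a 0%N.
  have h : nc (0 : C) <= rho / 2 by rewrite nc0; lra.
  have := hlim 0 h; rewrite nc0 mul0r mulr0 => h2.
  apply/eqP; rewrite -subr_eq0; apply/eqP; apply: nc_eq0.
  by apply/eqP; rewrite eq_le h2 nc_ge0.
exists (2 * B / rho); split; first by rewrite divr_ge0 ?mulr_ge0 // ltW.
have rho2 : 0 < rho / 2 by lra.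
apply: (nc_near0 rho2) => w hw; rewrite f0.
have e : 2 * B / rho * nc w = 2 * B * (nc w / rho) by rewrite mulrAC -!mulrA.
rewrite e; apply: hlim; exact: ltW.
Qed.


End An.

Section Fin.
Variable R : realType.
Local Notation C := R[i].

Lemma feq_of n N (F : C -> 'M[C]_(n, N)) (A : 'M[C]_N) (W : 'I_N -> 'cV[C]_N) (q : R) (z : C) :
  q < 1 -> (forall j, col j A = W j) ->
  (forall j, Rq q (fun x => F x *m delta_mx j 0) z = F z *m W j) ->
  F z *m (1%:M - ((1 - q%:C) * z) *: A) = F (q%:C * z).
Proof.
move=> hq1 hcol h.
case: (eqVneq z 0) => [->|z0]; first by rewrite !mulr0 scale0r subr0 mulmx1.
have q1 : 1 - q%:C != 0.
  rewrite subr_eq0; apply/eqP => e.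
  have : (1 : R) = q by apply: complexI; rewrite -e.
  by move=> e2; move: hq1; rewrite -e2 ltxx.
have c0 : (1 - q%:C) * z != 0 by rewrite mulf_neq0.
apply/matrixP => i j.
have h' := h j; rewrite /Rq (negbTE z0) /= -hcol (colE j A) mulmxA -!colE in h'.
rewrite mulmxBr mulmx1 -scalemxAr.
set X := F z *m A in h' *.
have := congr1 (fun M : 'M[C]_(n, 1) => M i 0) h'; rewrite !mxE => e.
rewrite -e mulVKf //; ring.
Qed.

Lemma qprod_comm N (q : R) (A B : 'M[C]_N) z m : A *m B = B *m A ->
  qprod q A z m *m B = B *m qprod q A z m.
Proof.
move=> hAB; elim: m => [|m IH] /=; first by rewrite mul1mx mulmx1.
have hc : invmx (1%:M - ((1 - q%:C) * z * q%:C ^+ m) *: A) *m B =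
          B *m invmx (1%:M - ((1 - q%:C) * z * q%:C ^+ m) *: A).
  by apply: comm_inv; rewrite mulmxBl mulmxBr mul1mx mulmx1 -scalemxAl -scalemxAr hAB.
by rewrite -mulmxA hc mulmxA IH -mulmxA.
Qed.

Lemma iterate N n (q : R) (A : 'M[C]_N) z (F : C -> 'M[C]_(n, N)) :
  0 <= q -> q < 1 -> k q A z <= (1 - q) / 2 ->
  (forall m, F (q%:C ^+ m * z) *m (1%:M - ((1 - q%:C) * (q%:C ^+ m * z)) *: A)
     = F (q%:C * (q%:C ^+ m * z))) ->
  forall m, F z = F (q%:C ^+ m * z) *m qprod q A z m.
Proof.
move=> hq0 hq1 hk hfe; elim=> [|m IH]; first by rewrite expr0 mul1r mulmx1.
have hM : Mf q A z m \in unitmx := Mf_unit hq0 hq1 hk m.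
have e1 : (1 - q%:C) * (q%:C ^+ m * z) = (1 - q%:C) * z * q%:C ^+ m by ring.
have e2 : q%:C * (q%:C ^+ m * z) = q%:C ^+ m.+1 * z by rewrite exprS mulrA.
have h := hfe m; rewrite e1 e2 in h.
change (F (q%:C ^+ m * z) *m Mf q A z m = F (q%:C ^+ m.+1 * z)) in h.
have hw : F (q%:C ^+ m * z) = F (q%:C ^+ m.+1 * z) *m invmx (Mf q A z m).
  by rewrite -h mulmxK.
have hAB : A *m invmx (Mf q A z m) = invmx (Mf q A z m) *m A.
  apply: esym; apply: comm_inv.
  by rewrite /Mf mulmxBl mulmxBr mul1mx mulmx1 -scalemxAl -scalemxAr.
rewrite IH hw qprodS -mulmxA; congr (_ *m _).
by rewrite qprod_comm.
Qed.

End Fin.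


Unset Implicit Arguments.

Theorem proposition2p2 (R : realType) (n N : nat) (q : R)
    (hq0 : 0 <= q) (hq1 : q < 1)
    (F : R[i] -> 'M[R[i]]_(n, N))
    (hF_an : mx_analytic0 F)
    (hF_ind : forall v : 'cV[R[i]]_N,
        (\forall z \near (0 : R[i]), F z *m v = 0) -> v = 0)
    (hF_inv : forall v : 'cV[R[i]]_N, exists w : 'cV[R[i]]_N,
        \forall z \near (0 : R[i]), Rq q (fun x => F x *m v) z = F z *m w) :
  exists A : 'M[R[i]]_N,
    \forall z \near (0 : R[i]),
      exists P : 'M[R[i]]_N,
        (fun m : nat => qprod q A z m) @ \oo --> P /\ F z = F 0 *m P.
Proof.
have [W hW] := choice (fun j : 'I_N => hF_inv (delta_mx j 0)).
pose A : 'M[R[i]]_N := \matrix_(i, j) W j i 0.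
exists A.
have hcol j : col j A = W j by apply/matrixP => i l; rewrite !mxE (ord1 l).
have hfe : \forall z \near (0 : R[i]), F z *m (1%:M - ((1 - q%:C) * z) *: A) = F (q%:C * z).
  have h1 : \forall z \near (0 : R[i]), forall j, Rq q (fun x => F x *m delta_mx j 0) z = F z *m W j.
    exact: (@filter_forall _ _ (fun j z => Rq q (fun x => F x *m delta_mx j 0) z = F z *m W j) _ (nbhs_filter (0 : R[i])) hW).
  by apply: filterS h1 => z hz; apply: feq_of hq1 hcol hz.
have [Kf hK] := choice (fun ij : 'I_n * 'I_N => analytic_lip (hF_an ij.1 ij.2)).
pose Ks := \sum_(ij : 'I_n * 'I_N) Kf ij.
have Ks0 : 0 <= Ks by apply: sumr_ge0 => ij _; exact: (hK ij).1.
have hlip : \forall w \near (0 : R[i]), Lm (F w - F 0) <= Ks * nc w.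
  have h1 : \forall w \near (0 : R[i]), forall ij : 'I_n * 'I_N, nc (F w ij.1 ij.2 - F 0 ij.1 ij.2) <= Kf ij * nc w.
    exact: (@filter_forall _ _ (fun ij w => nc (F w ij.1 ij.2 - F 0 ij.1 ij.2) <= Kf ij * nc w) _ (nbhs_filter (0 : R[i])) (fun ij => (hK ij).2)).
  apply: filterS h1 => w hw.
  rewrite /Lm /Ks mulr_suml pair_big /=; apply: ler_sum => ij _.
  by rewrite !mxE; exact: hw.
have LA0 := Lm_ge0 A.
have hsm : \forall w \near (0 : R[i]), nc w * Lm A <= 1 / 2.
  have d0 : 0 < 1 / (2 * (Lm A + 1)) by rewrite divr_gt0 // mulr_gt0 // ltr_wpDl.
  apply: (nc_near0 d0) => w hw.
  have hw' : nc w * (2 * (Lm A + 1)) < 1 by rewrite -ltr_pdivlMr // mulr_gt0 // ltr_wpDl.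
  have := nc_ge0 w; nra.
have [d [d0 hd]] := near0_nc (filterI hfe (filterI hlip hsm)).
apply: (nc_near0 d0) => z hz.
have ncz := nc_ge0 z.
have hqm m : nc (q%:C ^+ m * z) < d.
  rewrite ncM ncRX //.
  have : q ^+ m <= 1 by rewrite exprn_ile1 // ltW.
  have : 0 <= q ^+ m by rewrite exprn_ge0.
  nra.
have [_ [_ hsz]] := hd z hz.
have hk : k q A z <= (1 - q) / 2.
  have e : 1 - q%:C = (1 - q)%:C by rewrite rmorphB rmorph1.
  rewrite /k ncM e ncR ger0_norm; last by lra.
  have q1 : 0 <= 1 - q by lra.
  nra.
have hfe' m : F (q%:C ^+ m * z) *m (1%:M - ((1 - q%:C) * (q%:C ^+ m * z)) *: A)
     = F (q%:C * (q%:C ^+ m * z)).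
  by case: (hd _ (hqm m)).
have hit := iterate hq0 hq1 hk hfe'.
have hdiff := qprod_diff hq0 hq1 hk.
have [P hP] := geo_limM hq0 hdiff.
set D := 2 * N%:R * k q A z / (1 - q) in hP.
have k0 : 0 <= k q A z by rewrite /k mulr_ge0 ?nc_ge0 ?Lm_ge0.
have D0 : 0 <= D.
  apply: divr_ge0; last by lra.
  by apply: mulr_ge0 k0; apply: mulr_ge0; [lra|exact: ler0n].
set E := (N * N)%:R * (2 * D).
have E0 : 0 <= E by apply: mulr_ge0; [exact: ler0n|apply: mulr_ge0 D0; lra].
have hP' a : Lm (P - qprod q A z a) <= E * q ^+ a by rewrite /E -mulrA; exact: hP.
exists P; split; first exact: Lm_cvg hq0 hq1 E0 hP'.
apply/eqP; rewrite -subr_eq0; apply/eqP; apply: Lm_eq0.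
have LF0 := Lm_ge0 (F 0).
have E1 : 0 <= Ks * nc z * (2 * N%:R) + Lm (F 0) * E.
  apply: addr_ge0; last exact: mulr_ge0.
  by apply: mulr_ge0; [exact: mulr_ge0|apply: mulr_ge0; [lra|exact: ler0n]].
apply: (geo_zero hq0 hq1 E1) => m.
set w := q%:C ^+ m.+1 * z.
have e : F z - F 0 *m P = (F w - F 0) *m qprod q A z m.+1 + F 0 *m (qprod q A z m.+1 - P).
  by rewrite {1}(hit m.+1) mulmxBl mulmxBr addrA subrK.
rewrite e; apply: le_trans (LmD _ _) _.
have h1 := LmM (F w - F 0) (qprod q A z m.+1).
have h2 := LmM (F 0) (qprod q A z m.+1 - P).
have h3 := qprod_bound hq0 hq1 hk m.+1.
have h4 : Lm (F w - F 0) <= Ks * (q ^+ m.+1 * nc z).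
  have [_ [h _]] := hd _ (hqm m.+1).
  by move: h; rewrite /w ncM ncRX.
have h5 : Lm (qprod q A z m.+1 - P) <= E * q ^+ m.+1 by rewrite LmB.
have qm0 : 0 <= q ^+ m.+1 by rewrite exprn_ge0.
have l1 := Lm_ge0 (F w - F 0).
have l2 := Lm_ge0 (qprod q A z m.+1).
have l3 := Lm_ge0 (qprod q A z m.+1 - P).
have h6 : Lm (F w - F 0) * Lm (qprod q A z m.+1) <= Ks * (q ^+ m.+1 * nc z) * (2 * N%:R).
  by apply: ler_pM.
have h7 : Lm (F 0) * Lm (qprod q A z m.+1 - P) <= Lm (F 0) * (E * q ^+ m.+1).
  by apply: ler_wpM2l.
have e2 : (Ks * nc z * (2 * N%:R) + Lm (F 0) * E) * q ^+ m.+1 =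
   Ks * (q ^+ m.+1 * nc z) * (2 * N%:R) + Lm (F 0) * (E * q ^+ m.+1) by ring.
rewrite e2; lra.
Qed.
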